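(* Let $V$ be an $n$-dimensional vector space over $\mathbb R$ or $\mathbb C$ and let $K_1,\dots,K_n\in\mathrm{gl}(V)$ be pairwise commuting operators such that there exists $\xi\in V$ with $K_1\xi,\dots,K_n\xi$ linearly independent. Then $\mathfrak A=\operatorname{Span}(K_1,\dots,K_n)$ coincides with its centraliser $\mathcal C(\mathfrak A)=\{B\in\mathrm{gl}(V)\mid BA=AB\ \text{for all } A\in\mathfrak A\}$; consequently $\mathfrak A$ is a unital commutative associative subalgebra of $\mathrm{gl}(V)$. *)

(* Defs.v *)
From HB Require Import structures.
From mathcomp Require Import all_boot all_order all_algebra.
Set Implicit Arguments. Unset Strict Implicit. Unset Printing Implicit Defensive.
Import GRing.Theory.
Local Open Scope ring_scope.

(* V = F^n (column vectors 'cV[F]_n), gl(V) = 'M[F]_n, operators act by A *m v. *)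

Definition in_span (F : fieldType) (n : nat) (K : 'I_n -> 'M[F]_n) (B : 'M[F]_n) : Prop :=
  exists c : 'I_n -> F, B = \sum_(i < n) c i *: K i.

Definition in_centraliser (F : fieldType) (n : nat) (S : 'M[F]_n -> Prop) (B : 'M[F]_n) : Prop :=
  forall A, S A -> B *m A = A *m B.

Definition lin_indep (F : fieldType) (n : nat) (v : 'I_n -> 'cV[F]_n) : Prop :=
  forall c : 'I_n -> F, \sum_(i < n) c i *: v i = 0 -> forall i, c i = 0.

(* Main.v *)
Require Import Defs.
From mathcomp Require Import all_boot all_order all_algebra.
Import GRing.Theory.
Local Open Scope ring_scope.

Lemma comm_span (F : fieldType) (n : nat) (K : 'I_n -> 'M[F]_n) (X A : 'M[F]_n) :
  (forall j, X *m K j = K j *m X) -> in_span K A -> X *m A = A *m X.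
Proof.
move=> hX [d ->]; rewrite mulmx_sumr mulmx_suml; apply: eq_bigr => j _.
by rewrite -scalemxAr -scalemxAl hX.
Qed.

Lemma basis_decomp (F : fieldType) (n : nat) (K : 'I_n -> 'M[F]_n) (xi : 'cV[F]_n) :
  lin_indep (fun i => K i *m xi) ->
  forall v : 'cV[F]_n, exists d : 'I_n -> F, v = \sum_(i < n) d i *: (K i *m xi).
Proof.
move=> hind v.
pose M : 'M[F]_n := \matrix_i (K i *m xi)^T.
have hM : forall w : 'rV[F]_n, w *m M = (\sum_(i < n) w 0 i *: (K i *m xi))^T.
  move=> w; rewrite mulmx_sum_row linear_sum; apply: eq_bigr => i _.
  by rewrite linearZ rowK.
have fM : row_free M.
  rewrite -kermx_eq0; apply/eqP/row_matrixP => i; rewrite row0.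
  have : (row i (kermx M) <= kermx M)%MS by exact: row_sub.
  rewrite sub_kermx => /eqP; rewrite hM => /(congr1 trmx); rewrite trmxK linear0.
  move/hind => h; apply/matrixP => a j.
  by rewrite (ord1 a) h mxE.
have uM : M \in unitmx by rewrite -row_free_unit.
exists (fun i => (v^T *m invmx M) 0 i).
apply: trmx_inj; rewrite -hM.
by rewrite mulmxKV.
Qed.

Theorem lemma2p1 (F : fieldType) (n : nat) (K : 'I_n -> 'M[F]_n)
  (hcomm : forall i j, K i *m K j = K j *m K i)
  (hxi : exists xi : 'cV[F]_n, lin_indep (fun i => K i *m xi)) :
  (forall B : 'M[F]_n, in_span K B <-> in_centraliser (in_span K) B)
  /\ (in_span K 1%:M
      /\ (forall A B, in_span K A -> in_span K B -> in_span K (A *m B))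
      /\ (forall A B, in_span K A -> in_span K B -> A *m B = B *m A)).
Proof.
have Kspan : forall j, in_span K (K j).
  move=> j; exists (fun i => if i == j then 1 else 0).
  rewrite (bigD1 j) //= eqxx scale1r big1 ?addr0 // => i /negbTE ->.
  by rewrite scale0r.
have sub1 : forall B, in_span K B -> in_centraliser (in_span K) B.
  move=> B hB A hA; apply: comm_span hA => j.
  by symmetry; apply: comm_span hB => i.
have sub2 : forall B, in_centraliser (in_span K) B -> in_span K B.
  move=> B hB.
  have hBK : forall j, B *m K j = K j *m B by move=> j; apply: hB.
  case: hxi => xi hind.
  have [c hc] := @basis_decomp _ _ _ _ hind (B *m xi).
  set A := \sum_(i < n) c i *: K i.
  have hA : in_span K A by exists c.
  have hAK : forall j, A *m K j = K j *m A.
    by move=> j; symmetry; apply: comm_span hA => i.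
  exists c; rewrite -/A.
  set D := B - A.
  have hDK : forall j, D *m K j = K j *m D.
    by move=> j; rewrite /D mulmxBl mulmxBr hBK hAK.
  have hDxi : D *m xi = 0.
    rewrite /D mulmxBl hc /A mulmx_suml; apply/eqP; rewrite subr_eq0; apply/eqP; apply: eq_bigr => i _.
    by rewrite scalemxAl.
  have hDv : forall v : 'cV[F]_n, D *m v = 0.
    move=> v; have [d ->] := @basis_decomp _ _ _ _ hind v.
    rewrite mulmx_sumr big1 // => i _.
    by rewrite -scalemxAr mulmxA hDK -mulmxA hDxi mulmx0 scaler0.
  have D0 : D = 0.
    apply: trmx_inj; apply/row_matrixP => i; rewrite linear0 row0 rowE.
    by rewrite -[delta_mx 0 i]trmxK -trmx_mul hDv linear0.
  by apply/eqP; rewrite -subr_eq0 -/D D0.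
have eqv : forall B, in_span K B <-> in_centraliser (in_span K) B.
  by move=> B; split; [apply: sub1 | apply: sub2].
split=> //; split.
  by apply: sub2 => A _; rewrite mul1mx mulmx1.
split.
  move=> A B hA hB; apply: sub2 => C hC.
  by rewrite -mulmxA (sub1 _ hB _ hC) !mulmxA (sub1 _ hA _ hC).
by move=> A B hA hB; apply: sub1.
Qed.
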